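(* Let $L_n$ and $PL_n$ be as in the context. Then (1) $PL_n$ is a subgroup of the commutator subgroup $L_n'$ for all $n\ge 2$; and (2) $PL_n$ is not a characteristic subgroup of $L_n$ for $n\ge 4$.
   Context: For $n\ge 2$, $L_n=\langle y_1,\dots,y_{n-1}\mid y_j^2=1\ (1\le j\le n-1),\ y_iy_{i+1}y_i=y_{i+1}y_iy_{i+1}\ (1\le i\le n-2)\rangle$ (no relations between $y_i,y_j$ with $|i-j|\ge 2$). Let $\pi:L_n\to S_n$ be the surjective homomorphism with $\pi(y_i)=(i\ i{+}1)$, the transposition, and $PL_n=\ker\pi$. *)

(* Defs.v *)
(* The finitely presented group L_n is modelled by words in
   the generators (letter i stands for y_{i+1}, 0 <= i <= n-2) modulo the
   congruence generated by the defining relations. Since every generator is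
   an involution, the inverse of a word is its reversal. *)
From mathcomp Require Import all_boot all_fingroup.
Set Implicit Arguments. Unset Strict Implicit. Unset Printing Implicit Defensive.

Definition word := seq nat.

Definition valid (n : nat) (w : word) : bool := all (fun i => i.+1 < n) w.

Inductive req (n : nat) : word -> word -> Prop :=
| req_refl w : valid n w -> req n w w
| req_sym u v : req n u v -> req n v u
| req_trans u v w : req n u v -> req n v w -> req n u w
| req_cat u u' v v' : req n u u' -> req n v v' -> req n (u ++ v) (u' ++ v')
| req_inv j : j.+1 < n -> req n [:: j; j] [::]
| req_braid i : i.+2 < n -> req n [:: i; i.+1; i] [:: i.+1; i; i.+1].

Definition tp (n i : nat) : {perm 'I_n} :=
  match @insub _ (fun k => k < n) 'I_n i, @insub _ (fun k => k < n) 'I_n i.+1 with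
  | Some a, Some b => tperm a b
  | _, _ => 1%g
  end.

Definition piw (n : nat) (w : word) : {perm 'I_n} :=
  foldr (fun i s => (tp n i * s)%g) 1%g w.

Definition inPL (n : nat) (w : word) : Prop := req n w w /\ piw n w = 1%g.

Definition commw (u v : word) : word := rev u ++ rev v ++ u ++ v.

Definition in_derived (n : nat) (w : word) : Prop :=
  exists cs : seq (word * word),
    all (fun p => valid n p.1 && valid n p.2) cs /\
    req n w (flatten [seq commw p.1 p.2 | p <- cs]).

Definition ext (f : nat -> word) (w : word) : word := flatten (map f w).

Definition is_endo (n : nat) (f : nat -> word) : Prop :=
  forall u v, req n u v -> req n (ext f u) (ext f v).

Definition is_auto (n : nat) (f : nat -> word) : Prop :=
  is_endo n f /\ exists g, is_endo n g /\
    forall w, req n w w -> req n (ext g (ext f w)) w /\ req n (ext f (ext g w)) w.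

Definition PL_characteristic (n : nat) : Prop :=
  forall f, is_auto n f ->
    forall x, inPL n x <-> exists w, inPL n w /\ req n (ext f w) x.

(* Main.v *)
Require Import Defs.
From mathcomp Require Import all_boot all_fingroup zify.
Definition sw (i k : nat) := if k == i then i.+1 else if k == i.+1 then i else k.
Lemma eqF {a b : nat} : a <> b -> (a == b) = false.
Proof. by move/eqP/negbTE. Qed.
Lemma sw_braid i k : sw i (sw i.+1 (sw i k)) = sw i.+1 (sw i (sw i.+1 k)).
Proof.
have a1 : i <> i.+2 by lia. have a2 : i.+2 <> i by lia.
have a3 : i.+2 <> i.+1 by lia. have a4 : i.+1 <> i.+2 by lia.
have a5 : i <> i.+1 by lia. have a6 : i.+1 <> i by lia.
rewrite /sw.
case: (k =P i) => [E|H1].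
  subst k.
  by do 4 rewrite ?eqxx ?(eqF a1) ?(eqF a2) ?(eqF a3) ?(eqF a4) ?(eqF a5) ?(eqF a6) /=.
case: (k =P i.+1) => [E|H2].
  subst k.
  by do 4 rewrite ?eqxx ?(eqF a1) ?(eqF a2) ?(eqF a3) ?(eqF a4) ?(eqF a5) ?(eqF a6) /=.
case: (k =P i.+2) => [E|H3].
  subst k.
  by do 4 rewrite ?eqxx ?(eqF a1) ?(eqF a2) ?(eqF a3) ?(eqF a4) ?(eqF a5) ?(eqF a6) /=.
by do 4 rewrite ?eqxx ?(eqF H1) ?(eqF H2) ?(eqF H3) /=.
Qed.
Lemma sw_inv i k : sw i (sw i k) = k.
Proof.
have a5 : i <> i.+1 by lia. have a6 : i.+1 <> i by lia.
rewrite /sw.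
case: (k =P i) => [E|H1].
  subst k.
  by do 4 rewrite ?eqxx ?(eqF a5) ?(eqF a6) /=.
case: (k =P i.+1) => [E|H2].
  subst k.
  by do 4 rewrite ?eqxx ?(eqF a5) ?(eqF a6) /=.
by do 4 rewrite ?eqxx ?(eqF H1) ?(eqF H2) /=.
Qed.

Lemma tpE n i (x : 'I_n) : i.+1 < n -> val (tp n i x) = sw i (val x).
Proof.
move=> h; rewrite /tp.
case: insubP => [a Pa va|]; last by rewrite ltnW.
case: insubP => [b Pb vb|]; last by rewrite h.
case: tpermP => [->|->|H1 H2]; rewrite /sw ?va ?vb ?eqxx //.
  by case: eqP => // ?; lia.
have -> : (val x == i) = false by rewrite -va; apply/negbTE/negP => /eqP/val_inj.
by have -> : (val x == i.+1) = false by rewrite -vb; apply/negbTE/negP => /eqP/val_inj.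
Qed.
Lemma tp_ne n i : i.+1 < n -> odd_perm (tp n i) = true.
Proof.
move=> h; rewrite /tp.
case: insubP => [a Pa va|]; last by rewrite ltnW.
case: insubP => [b Pb vb|]; last by rewrite h.
rewrite odd_tperm; apply/eqP => E.
by move: (congr1 val E); rewrite va vb; lia.
Qed.
Lemma valid_cat n u v : valid n (u ++ v) = valid n u && valid n v.
Proof. by rewrite /valid all_cat. Qed.

Lemma req_valid n u v : req n u v -> valid n u /\ valid n v.
Proof.
elim=> //=; clear u v.
- move=> u v _ [] //.
- move=> u v w _ [] ? _ _ [] _ ? //.
- move=> u u' v v' _ [] ? ? _ [] ? ?; rewrite !valid_cat; split; apply/andP; by split.
- by move=> j h; rewrite /valid /= h.
- by move=> i h; rewrite /valid /= h ltnW.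
Qed.

Lemma reqR n w : valid n w -> req n w w.
Proof. exact: req_refl. Qed.

Lemma piwE n w (x : 'I_n) : valid n w ->
  val (piw n w x) = foldl (fun k i => sw i k) (val x) w.
Proof.
elim: w x => [|a w IH] x //=; first by rewrite perm1.
move=> /andP [ha hw]; by rewrite permM IH // tpE.
Qed.

Lemma piw_cat n u v : piw n (u ++ v) = (piw n u * piw n v)%g.
Proof. elim: u => [|a u IH] /=; first by rewrite mul1g. by rewrite IH mulgA. Qed.

Lemma req_piw n u v : req n u v -> piw n u = piw n v.
Proof.
elim=> //; clear u v.
- by move=> u v w _ -> _ ->.
- by move=> u u' v v' _ E1 _ E2; rewrite !piw_cat E1 E2.
- move=> j h; apply/permP => x; apply: val_inj.
  rewrite (piwE _ [:: j; j]) /= ?h // perm1 /=; exact: sw_inv.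
- move=> i h; apply/permP => x; apply: val_inj.
  rewrite (piwE _ [:: i; i.+1; i]) /=; last by rewrite h ltnW.
  rewrite (piwE _ [:: i.+1; i; i.+1]) /=; last by rewrite h ltnW.
  exact: sw_braid.
Qed.

Lemma odd_piw n w : valid n w -> odd_perm (piw n w) = odd (size w).
Proof.
elim: w => [|a w IH] /=; first by rewrite odd_perm1.
by move=> /andP [ha hw]; rewrite odd_permM tp_ne // IH.
Qed.

Lemma req_mid n u x y v : valid n u -> valid n v -> req n x y ->
  req n (u ++ x ++ v) (u ++ y ++ v).
Proof. move=> hu hv h; apply: req_cat; first exact: reqR. apply: req_cat => //; exact: reqR. Qed.

Lemma valid_rev n g : valid n (rev g) = valid n g.
Proof. by rewrite /valid all_rev. Qed.

Lemma cancel_rev n g : valid n g -> req n (rev g ++ g) [::].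
Proof.
elim: g => [|a g IH] /=; first by move=> _; exact: reqR.
move=> /andP [ha hg]; rewrite rev_cons cat_rcons.
apply: (req_trans (v := rev g ++ [::] ++ g)); last exact: IH.
apply: (@req_mid n (rev g) [:: a; a] [::] g); rewrite ?valid_rev //; exact: req_inv.
Qed.

Lemma cancel_rev2 n g : valid n g -> req n (g ++ rev g) [::].
Proof.
elim: g => [|a g IH] /=; first by move=> _; exact: reqR.
move=> /andP [ha hg]; rewrite rev_cons -cats1.
apply: (req_trans (v := [:: a] ++ [::] ++ [:: a])); last exact: req_inv.
rewrite (_ : a :: g ++ rev g ++ [:: a] = [:: a] ++ (g ++ rev g) ++ [:: a]); last by rewrite -catA.
apply: (@req_mid n [:: a] (g ++ rev g) [::] [:: a]); rewrite /valid /= ?ha //; exact: IH.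
Qed.

Lemma conj0 n a : a.+1 < n -> exists g, valid n g /\ req n [:: a] (g ++ 0 :: rev g).
Proof.
elim: a => [|a IH] h.
  exists [::]; split => //; apply: reqR; by rewrite /valid /= h.
have ha : a.+1 < n by apply: ltnW.
have [g [hg E]] := IH ha.
exists ([:: a; a.+1] ++ g); split.
  by rewrite valid_cat hg /valid /= ha h.
have s1 : req n [:: a.+1] [:: a; a.+1; a; a.+1; a].
  apply: req_sym.
  apply: (req_trans (v := [:: a] ++ [:: a; a.+1; a] ++ [:: a])).
    apply: (@req_mid n [:: a] [:: a.+1; a; a.+1] [:: a; a.+1; a] [:: a]);
      rewrite /valid /= ?ha //; apply: req_sym; exact: req_braid.
      rewrite /valid /= ?ha //.
  apply: (@req_cat n [:: a; a] [::] ([:: a.+1] ++ [:: a; a]) ([:: a.+1] ++ [::])).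
    exact: req_inv.
  apply: req_cat; first by apply: reqR; rewrite /valid /= h.
  exact: req_inv.
apply: (req_trans s1).
apply: (req_trans (v := [:: a; a.+1] ++ (g ++ 0 :: rev g) ++ [:: a.+1; a])).
  apply: (@req_mid n [:: a; a.+1] [:: a] _ [:: a.+1; a]); rewrite /valid /= ?ha ?h //.
rewrite rev_cat -!catA /=; apply: reqR.
by move: hg; rewrite /valid /= ha h !all_cat => hg; rewrite hg /= !all_cat all_rev hg /= ha h; lia.

Qed.

Lemma conj_sw n a g : a.+1 < n -> valid n g -> req n [:: a] (g ++ 0 :: rev g) ->
  req n [:: 0] (rev g ++ a :: g).
Proof.
move=> ha hg E; apply: req_sym.
have hr : valid n (rev g) by rewrite valid_rev.
apply: (req_trans (v := rev g ++ (g ++ [:: 0] ++ rev g) ++ g)).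
  exact: (@req_mid n (rev g) [:: a] _ g).
rewrite (_ : rev g ++ (g ++ [:: 0] ++ rev g) ++ g = (rev g ++ g) ++ [:: 0] ++ (rev g ++ g));
  last by rewrite -!catA.
rewrite -[[:: 0]]/([::] ++ [:: 0] ++ [::]).
apply: req_cat; first exact: cancel_rev.
apply: req_cat; last exact: cancel_rev.
by apply: reqR; rewrite /valid /=; lia.
Qed.

Lemma pair_comm n a b : a.+1 < n -> b.+1 < n ->
  exists c, valid n c /\ req n [:: a; b] (commw [:: a] (rev c)).
Proof.
move=> ha hb.
have [g [hg Eg]] := conj0 _ _ ha.
have [k [hk Ek]] := conj0 _ _ hb.
have E0 := conj_sw _ _ _ ha hg Eg.
have hrk : valid n (rev k) by rewrite valid_rev.
have hrg : valid n (rev g) by rewrite valid_rev.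
exists (k ++ rev g); split; first by rewrite valid_cat hk hrg.
rewrite /commw revK /= rev_cat revK.
change (req n ([:: a] ++ [:: b]) ([:: a] ++ ((k ++ rev g) ++ a :: g ++ rev k))).
apply: req_cat; first by apply: reqR; rewrite /valid /= ha.
apply: (req_trans Ek).
rewrite (_ : (k ++ rev g) ++ a :: g ++ rev k = k ++ (rev g ++ a :: g) ++ rev k);
  last by rewrite -!catA.
rewrite -[0 :: rev k]/([:: 0] ++ rev k).
exact: req_mid.
Qed.

Lemma even_derived n m w : size w <= m -> valid n w -> ~~ odd (size w) -> in_derived n w.
Proof.
elim: m w => [|m IH] [|a [|b w]] //=.
- move=> _ _ _; exists [::]; split => //; exact: reqR.
- move=> _ _ _; exists [::]; split => //; exact: reqR.
- move=> hs /andP [ha /andP [hb hw]]; rewrite negbK => ho.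
  have [cs [hcs Ecs]] : in_derived n w by apply: IH => //; lia.
  have [c [hc Ec]] := pair_comm _ _ _ ha hb.
  exists (([:: a], rev c) :: cs); split.
    by rewrite /= hcs andbT valid_rev hc andbT /valid /= ha.
  rewrite /= -[a :: b :: w]/([:: a; b] ++ w).
  exact: (req_cat Ec Ecs).
Qed.

Lemma part1 n : 2 <= n -> forall w : word, inPL n w -> in_derived n w.
Proof.
move=> _ w [Ew Pw].
have [hw _] := req_valid _ _ _ Ew.
apply: (even_derived _ (size w)) => //.
by rewrite -(odd_piw n w hw) Pw odd_perm1.
Qed.

Definition fA (j : nat) : word := if j == 0 then [:: 1; 0; 1] else [:: j].

Ltac vt := rewrite /valid /=; repeat (apply/andP; split); try done; lia.

Lemma ext_cat f u v : ext f (u ++ v) = ext f u ++ ext f v.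
Proof. by rewrite /ext map_cat flatten_cat. Qed.

Lemma valid_ext n w : 2 < n -> valid n w -> valid n (ext fA w).
Proof.
move=> h; elim: w => [|a w IH] //= /andP [ha hw].
rewrite -/(ext fA w) valid_cat IH // andbT /fA.
by case: eqP => _; vt.
Qed.

Lemma r1 n : 2 < n -> req n [:: 1; 1; 0; 1; 1] [:: 0].
Proof.
move=> h.
apply: (@req_cat n [:: 1; 1] [::] ([:: 0] ++ [:: 1; 1]) ([:: 0] ++ [::])).
  apply: req_inv; lia.
apply: req_cat; first by apply: reqR; vt.
apply: req_inv; lia.
Qed.

Lemma r2 n : 2 < n -> req n [:: 1; 0; 1; 1; 1; 0; 1] [:: 0].
Proof.
move=> h.
apply: (@req_trans n _ ([:: 1; 0] ++ [::] ++ [:: 1; 0; 1])).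
  apply: (@req_mid n [:: 1; 0] [:: 1; 1] [::] [:: 1; 0; 1]); try vt.
  apply: req_inv; lia.
apply: (@req_trans n _ ([::] ++ [:: 0; 1; 0] ++ [:: 0; 1])).
  apply: (@req_mid n [::] [:: 1; 0; 1] [:: 0; 1; 0] [:: 0; 1]); try vt.
  apply: req_sym; apply: req_braid; lia.
apply: (@req_trans n _ ([:: 0; 1] ++ [::] ++ [:: 1])).
  apply: (@req_mid n [:: 0; 1] [:: 0; 0] [::] [:: 1]); try vt.
  apply: req_inv; lia.
apply: (@req_trans n _ ([:: 0] ++ [::] ++ [::])).
  apply: (@req_mid n [:: 0] [:: 1; 1] [::] [::]); try vt.
  apply: req_inv; lia.
apply: reqR; vt.
Qed.

Lemma endoA n : 2 < n -> is_endo n fA.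
Proof.
move=> h u v; elim => {u v}.
- move=> w hw; apply: reqR; exact: valid_ext.
- move=> u v _; exact: req_sym.
- move=> u v w _ E1 _ E2; exact: req_trans E1 E2.
- move=> u u' v v' _ E1 _ E2; rewrite !ext_cat; exact: req_cat.
- move=> j hj; rewrite /ext /= /fA; case: eqP => [E|_] /=; first subst j.
    exact: (cancel_rev2 n [:: 1; 0; 1] ltac:(vt)).
  exact: req_inv.
- move=> i hi; rewrite /ext /= /fA; case: eqP => [E|_] /=; first subst i.
    apply: (req_trans (r2 n h)); apply: req_sym; exact: r1.
  exact: req_braid.
Qed.

Lemma ffA n w : 2 < n -> valid n w -> req n (ext fA (ext fA w)) w.
Proof.
move=> h; elim: w => [|a w IH] /= ; first by move=> _; exact: reqR.
move=> /andP [ha hw].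
rewrite -/(ext fA w) ext_cat.
apply: (@req_cat n _ [:: a] _ w); last exact: IH.
case: a ha => [|a] ha; first exact: r1.
apply: reqR; vt.
Qed.

Lemma autoA n : 2 < n -> is_auto n fA.
Proof.
move=> h; split; first exact: endoA.
exists fA; split; first exact: endoA.
move=> w Ew; have [hw _] := req_valid _ _ _ Ew.
by split; apply: ffA.
Qed.

Lemma sw02 k : sw 2 (sw 0 (sw 2 (sw 0 k))) = k.
Proof. by case: k => [|[|[|[|k]]]]. Qed.

Lemma part2 n : 4 <= n -> ~ PL_characteristic n.
Proof.
move=> h4 H.
have h : 2 < n by lia.
have hv : valid n [:: 0; 2; 0; 2] by vt.
have Hw0 : inPL n [:: 0; 2; 0; 2].
  split; first exact: reqR.
  apply/permP => x; apply: val_inj.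
  by rewrite (piwE _ _ _ hv) perm1 /= sw02.
have [_ P] := (H fA (autoA n h) (ext fA [:: 0; 2; 0; 2])).2
  (ex_intro _ _ (conj Hw0 (reqR _ _ (valid_ext _ _ h hv)))).
have h0 : 0 < n by lia.
have := congr1 (fun s : {perm 'I_n} => val (s (Ordinal h0))) P.
by rewrite /= (piwE _ _ _ (valid_ext _ _ h hv)) perm1.
Qed.

Theorem proposition5p1 :
  (forall n : nat, 2 <= n -> forall w : word, inPL n w -> in_derived n w) /\
  (forall n : nat, 4 <= n -> ~ PL_characteristic n).
Proof. split; [exact: part1 | exact: part2]. Qed.
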